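(* Let $G$ be a graph of tree-width $k\geq 3$. Then the minor-3-core of $G$ also has tree-width $k$.
   Context: Graphs are simple and undirected. A minor of $G$ is a graph obtained from $G$ by vertex contractions (contracting a vertex $u$ into a neighbour $v$, i.e. an edge contraction keeping the name $v$) and subgraph operations. A minor-3-core of $G$ is a minor $H$ of $G$ with minimum degree at least $3$ such that no minor of $G$ with minimum degree at least $3$ has more edges than $H$; all minor-3-cores of $G$ are isomorphic, so one speaks of the minor-3-core. Equivalently, it is the graph obtained by repeatedly contracting a vertex of degree at most $2$ into a neighbour and deleting isolated vertices until neither operation applies. *)

(* Defs.v *)
From Stdlib Require Import Relation_Operators.
From mathcomp Require Import all_boot.
Set Implicit Arguments. Unset Strict Implicit. Unset Printing Implicit Defensive.

Record graph (T : finType) := Graph { gV : {set T}; gE : rel T }.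

Section Graphs.
Variable T : finType.
Implicit Types (G H : graph T) (x y u v : T).

Definition wf_graph G : Prop :=
  [/\ symmetric (gE G), irreflexive (gE G) &
      forall x y, gE G x y -> (x \in gV G) && (y \in gV G)].

Definition nedges G : nat :=
  #|[set e : {set T} | [exists x, exists y, (e == [set x; y]) && gE G x y]]|.

Definition deg G v : nat := #|[set u | gE G v u]|.

Definition mindeg_ge3 G : Prop := forall v, v \in gV G -> 3 <= deg G v.

Definition del_vertex G x : graph T :=
  Graph (gV G :\ x) [rel a b | [&& gE G a b, a != x & b != x]].

Definition del_edge G x y : graph T :=
  Graph (gV G) [rel a b | gE G a b &&
                 ~~ (((a == x) && (b == y)) || ((a == y) && (b == x)))].

(* contract vertex u into its neighbour v, keeping the name v *)
Definition contract G u v : graph T :=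
  Graph (gV G :\ u)
    [rel a b | [&& a != u, b != u, a != b &
       [|| gE G a b, (a == v) && gE G u b | (b == v) && gE G a u]]].

Inductive minor_step G : graph T -> Prop :=
| MS_del_vertex x : x \in gV G -> minor_step G (del_vertex G x)
| MS_del_edge x y : gE G x y -> minor_step G (del_edge G x y)
| MS_contract u v : gE G u v -> minor_step G (contract G u v).

Definition minor G H : Prop := clos_refl_trans (graph T) minor_step G H.

Definition minor3core G H : Prop :=
  [/\ minor G H, mindeg_ge3 H &
      forall H', minor G H' -> mindeg_ge3 H' -> nedges H' <= nedges H].

End Graphs.

Definition is_tree (I : finType) (tE : rel I) : Prop :=
  [/\ symmetric tE, irreflexive tE, 0 < #|I|,
      forall i j, connect tE i j &
      forall c : seq I, uniq c -> 2 < size c -> ~~ cycle tE c].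

Definition has_tw_le (T : finType) (G : graph T) (k : nat) : Prop :=
  exists (I : finType) (tE : rel I) (B : I -> {set T}),
  [/\ is_tree tE /\ (forall i, B i \subset gV G),
      forall x, x \in gV G -> exists i, x \in B i,
      forall x y, gE G x y -> exists i, (x \in B i) && (y \in B i),
      forall x i j, x \in B i -> x \in B j ->
         connect [rel a b | [&& tE a b, x \in B a & x \in B b]] i j &
      forall i, #|B i| <= k.+1].

Definition treewidth (T : finType) (G : graph T) (k : nat) : Prop :=
  has_tw_le G k /\ forall j, has_tw_le G j -> k <= j.

(* Main.v *)
Require Import Defs.
From mathcomp Require Import all_boot.
From Stdlib Require Import Relation_Operators.

Module Aux.
Set Implicit Arguments. Unset Strict Implicit. Unset Printing Implicit Defensive.


Lemma connect_hom (A B : finType) (e : rel A) (e' : rel B) (f : A -> B) :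
  (forall a b, e a b -> connect e' (f a) (f b)) ->
  forall x y, connect e x y -> connect e' (f x) (f y).
Proof.
move=> h x y /connectP [p]; elim: p x => [|z p IH] x /=; first by move=> _ ->.
case/andP=> exz pz ly; exact: connect_trans (h _ _ exz) (IH _ pz ly).
Qed.

Lemma connect_mono (A : finType) (e e' : rel A) :
  (forall a b, e a b -> e' a b) -> forall x y, connect e x y -> connect e' x y.
Proof. move=> h; apply: (@connect_hom _ _ e e' id) => a b /h; exact: connect1. Qed.

Lemma connect_first (A : finType) (e : rel A) x y :
  connect e x y -> x != y -> exists2 z, e x z & connect e z y.
Proof.
case/connectP=> [[|z p]] /=; first by move=> _ ->; rewrite eqxx.
case/andP=> exz pz ly _; exists z => //; apply/connectP; by exists p.
Qed.

Section S.
Variable T : finType.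
Implicit Types (G H K : graph T).

Lemma wf_step G K : wf_graph G -> minor_step G K -> wf_graph K.
Proof.
case=> sG iG vG; case=> [x _|x y _|u v uv].
- split=> [a b|a|a b] /=; first by rewrite sG; case: (a != x); case: (b != x); rewrite ?andbT ?andbF.
  + by rewrite iG.
  + by case/and3P=> /vG /andP[? ?] ? ?; rewrite !in_setD1; apply/andP; split; apply/andP.
- split=> [a b|a|a b] /=; first by rewrite sG [(b == x) && _]andbC [(b == y) && _]andbC orbC.
  + by rewrite iG.
  + by case/andP=> /vG.
- have /andP[uV vV] := vG _ _ uv.
  split=> [a b|a|a b] /=.
  + rewrite (sG b a) (sG u a) (sG u b) (eq_sym b a).
    by case: (a != u); case: (b != u); case: (a != b) => //=; rewrite (orbC ((b == v) && _)).
  + by rewrite eqxx /= ?andbF.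
  + case/and4P=> au bu _; rewrite !in_setD1 au bu /=.
    by case/or3P=> [/vG //| /andP[/eqP -> /vG /andP[_ ->]]| /andP[/eqP -> /vG /andP[-> _]]]; rewrite ?vV.
Qed.

Lemma wf_minor G K : wf_graph G -> minor G K -> wf_graph K.
Proof. move=> wG m; elim: m wG => [x y /wf_step h /h| x| x y z _ IH1 _ IH2 /IH1 /IH2] //. Qed.

Lemma tw_mono G k k' : k <= k' -> has_tw_le G k -> has_tw_le G k'.
Proof.
move=> kk [I [tE [B [t c e cn s]]]]; exists I, tE, B; split => // i.
exact: leq_trans (s i) _.
Qed.

End S.


Section S.
Variable T : finType.
Implicit Types (G H K : graph T).

Lemma tw_step G K k : wf_graph G -> minor_step G K -> has_tw_le G k -> has_tw_le K k.
Proof.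
case=> sG iG vG; case=> [x _|x y _|u v uv]; case=> [I [tE [B [[t sub] c e cn s]]]].
- exists I, tE, (fun i => B i :\ x); split.
  + split=> // i; exact: setSD.
  + move=> y /setD1P [yx /c [i yi]]; exists i; by rewrite in_setD1 yx.
  + move=> a b /and3P [ab ax bx]; have [i /andP [ai bi]] := e _ _ ab.
    by exists i; rewrite !in_setD1 ax bx ai bi.
  + move=> z i j /setD1P [zx zi] /setD1P [_ zj].
    apply: connect_mono (cn _ _ _ zi zj) => a b /=.
    by rewrite !in_setD1 zx.
  + move=> i; apply: leq_trans (s i); apply: subset_leq_card; exact: subsetDl.
- exists I, tE, B; split => //.
  move=> a b /andP [/e ab _]; exact: ab.
- have /andP [uV vV] := vG _ _ uv.
  have vu : v != u by apply/eqP => vu; move: uv; rewrite vu iG.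
  pose B' i := if u \in B i then v |: (B i :\ u) else B i.
  have B'1 i z : z != u -> z \in B i -> z \in B' i.
    by rewrite /B' => zu zi; case: ifP => _ //; rewrite !inE zu zi orbT.
  have B'2 i : u \in B i -> v \in B' i by rewrite /B' => ->; rewrite !inE eqxx.
  have B'3 i z : z \in B' i -> z != u.
    rewrite /B'; case: ifP => ui; first by rewrite !inE => /orP [/eqP -> //| /andP[]].
    by apply: contraTneq => ->; rewrite ui.
  have B'4 i z : z != v -> z \in B' i -> z \in B i.
    by rewrite /B'; case: ifP => ui // zv; rewrite !inE (negbTE zv) /= => /andP[].
  have B'5 i : v \in B' i -> (v \in B i) || (u \in B i).
    by rewrite /B'; case: ifP => ui; rewrite ?orbT // => ->.
  exists I, tE, B'; split.
  + split => // i; apply/subsetP => z zi; rewrite in_setD1 (B'3 _ _ zi) /=.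
    case: (eqVneq z v) => [-> //| zv]; exact: (subsetP (sub i)) _ (B'4 _ _ zv zi).
  + move=> z /setD1P [zu /c [i zi]]; exists i; exact: B'1.
  + move=> a b /and4P [au bu _ /or3P [ab | /andP [/eqP -> ub] | /andP [/eqP -> au']]].
    * have [i /andP [ai bi]] := e _ _ ab; by exists i; rewrite !B'1.
    * have [i /andP [ui bi]] := e _ _ ub; by exists i; rewrite B'2 // B'1.
    * have [i /andP [ai ui]] := e _ _ au'; by exists i; rewrite B'2 // B'1.
  + move=> z i j zi zj.
    case: (eqVneq z v) => [zv | zv].
    * subst z.
      have [i0 /andP [ui0 vi0]] := e _ _ uv.
      pose R := [rel a b | [&& tE a b, v \in B' a & v \in B' b]].
      have sR : connect_sym R.
        apply: sym_connect_sym => a b /=; rewrite (andbC (v \in B' a)).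
        by case: t => st _ _ _ _; rewrite st.
      have toi0 l : v \in B' l -> connect R l i0.
        move=> /B'5 /orP [vl | ul].
        - apply: connect_mono (cn _ _ _ vl vi0) => a b /and3P [tab va vb].
          by rewrite /R /= tab (B'1 _ _ vu va) (B'1 _ _ vu vb).
        - apply: connect_mono (cn _ _ _ ul ui0) => a b /and3P [tab ua ub].
          by rewrite /R /= tab !B'2.
      by apply: connect_trans (toi0 _ zi) _; rewrite sR; exact: toi0.
    * have zu := B'3 _ _ zi.
      apply: connect_mono (cn _ _ _ (B'4 _ _ zv zi) (B'4 _ _ zv zj)) => a b /and3P [tab za zb].
      by rewrite /= tab !B'1.
  + move=> i; apply: leq_trans (s i); rewrite /B'; case: ifP => ui //.
    rewrite cardsU1 (cardsD1 u (B i)) ui add1n.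
    by case: (v \notin _).
Qed.

Lemma tw_minor G K k : wf_graph G -> minor G K -> has_tw_le G k -> has_tw_le K k.
Proof.
move=> wG m; elim: m wG => [x y st wx | x _ | x y z m1 IH1 m2 IH2 wx] //.
  exact: tw_step st.
move/(IH1 wx); apply: IH2; exact: wf_minor wx m1.
Qed.

End S.


Section S.
Variable T : finType.
Implicit Types (G H K : graph T).

Definition inside G (S : {set T}) : rel T := [rel a b | [&& gE G a b, a \in S & b \in S]].

Definition mmodel G K (X : T -> {set T}) : Prop :=
 [/\ forall h, h \in gV K -> X h != set0,
     forall h, h \in gV K -> X h \subset gV G,
     forall h h' z, h \in gV K -> h' \in gV K -> h != h' -> z \in X h -> z \in X h' -> False,
     forall h, h \in gV K -> forall x y, x \in X h -> y \in X h -> connect (inside G (X h)) x y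
   & forall h h', gE K h h' -> exists x y, [/\ x \in X h, y \in X h' & gE G x y]].

Lemma inside_sym G S : wf_graph G -> connect_sym (inside G S).
Proof.
case=> sG _ _; apply: sym_connect_sym => a b /=.
by rewrite /inside /= sG (andbC (a \in S)).
Qed.

Lemma model_refl G : wf_graph G -> mmodel G G (fun h => [set h]).
Proof.
case=> sG iG vG; split.
- move=> h _; apply/set0Pn; exists h; exact: set11.
- by move=> h hV; rewrite sub1set.
- by move=> h h' z _ _ hh' /set1P -> /set1P hh; rewrite hh eqxx in hh'.
- by move=> h _ x y /set1P -> /set1P ->.
- by move=> h h' hh'; exists h, h'; rewrite !set11.
Qed.

Lemma model_step G K K' X : wf_graph G -> wf_graph K -> mmodel G K X ->
  minor_step K K' -> exists X', mmodel G K' X'.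
Proof.
move=> wG [sK iK vK] [m1 m2 m3 m4 m5]; case=> [x _|x y _|u v uv].
- exists X; split.
  + by move=> h /setD1P [_ /m1].
  + by move=> h /setD1P [_ /m2].
  + by move=> h h' z /setD1P [_ hV] /setD1P [_ h'V]; apply: m3.
  + by move=> h /setD1P [_ /m4].
  + by move=> h h' /and3P [/m5].
- exists X; split => //.
  by move=> h h' /andP [/m5].
- have /andP [uV vV] := vK _ _ uv.
  have vu : v != u by apply/eqP => vu; move: uv; rewrite vu iK.
  pose X' h := if h == v then X v :|: X u else X h.
  have X'1 h z : z \in X h -> z \in X' h.
    rewrite /X'; case: (eqVneq h v) => [hv zv|//]. by rewrite inE -hv zv.
  have X'2 z : z \in X u -> z \in X' v by rewrite /X' eqxx inE orbC => ->.
  exists X'; split.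
  + move=> h /setD1P [_ /m1 /set0Pn [z zh]]; apply/set0Pn; exists z; exact: X'1.
  + move=> h /setD1P [_ hV]; rewrite /X'; case: eqP => [_|_]; last exact: m2.
    by rewrite subUset m2 // m2.
  + have key h h' z : h \in gV K :\ u -> h' \in gV K :\ u -> h != h' -> h == v ->
        z \in X' h -> z \in X' h' -> False.
      move=> /setD1P [_ hV] /setD1P [h'u h'V] hh' /eqP hv; subst h.
      rewrite /X' eqxx eq_sym (negbTE hh') inE => /orP [zv|zu] zh'.
      * exact: (m3 _ _ _ vV h'V hh' zv zh').
      * by apply: (m3 _ _ _ uV h'V _ zu zh'); rewrite eq_sym.
    move=> h h' z hV h'V hh'.
    case: (eqVneq h v) => hv; first exact: key hV h'V hh' (introT eqP hv).
    case: (eqVneq h' v) => h'v.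
      by move=> a b; apply: (key _ _ _ h'V hV _ (introT eqP h'v) b a); rewrite eq_sym.
    rewrite /X' (negbTE hv) (negbTE h'v).
    by case/setD1P: hV => _ hV; case/setD1P: h'V => _ h'V; apply: m3.
  + move=> h /setD1P [hu hV]; rewrite /X'; case: eqP => [_|_]; last exact: m4.
    have [x0 [y0 [x0u y0v x0y0]]] := m5 _ _ uv.
    set S := X v :|: X u.
    have toy0 z : z \in S -> connect (inside G S) z y0.
      rewrite inE => /orP [zv|zu].
      * apply: connect_mono (m4 _ vV _ _ zv y0v) => a b /and3P [ab av bv].
        by rewrite /inside /= ab !inE av bv.
      * apply: connect_trans (connect_mono _ (m4 _ uV _ _ zu x0u)) (connect1 _).
          by move=> a b /and3P [ab au bu]; rewrite /inside /= ab !inE au bu !orbT.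
        by rewrite /inside /= x0y0 !inE x0u y0v orbT.
    move=> x y xS yS; apply: connect_trans (toy0 _ xS) _.
    by rewrite inside_sym //; exact: toy0.
  + move=> a b /and4P [au bu _ /or3P [ab | /andP [/eqP -> ub] | /andP [/eqP -> au']]].
    * have [x [y [xa yb xy]]] := m5 _ _ ab; exists x, y; by rewrite !X'1.
    * have [x [y [xu yb xy]]] := m5 _ _ ub; exists x, y; by rewrite X'2 // X'1.
    * have [x [y [xa yu xy]]] := m5 _ _ au'; exists x, y; by rewrite X'2 // X'1.
Qed.

Lemma model_minor G K : wf_graph G -> minor G K -> exists X, mmodel G K X.
Proof.
move=> wG m.
suff: forall K1 K2, minor K1 K2 -> wf_graph K1 -> (exists X, mmodel G K1 X) -> exists X, mmodel G K2 X.
  by move/(_ _ _ m wG); apply; exists (fun h => [set h]); exact: model_refl.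
move=> K1 K2; elim=> [x y st wx [X mX] | x // | x y z m1 IH1 m2 IH2 wx hx].
  exact: model_step mX st.
apply: IH2; [exact: wf_minor wx m1 | exact: IH1].
Qed.

End S.


Section S.
Variable T : finType.
Implicit Types (G H K : graph T).

Definition Eset G := [set e : {set T} | [exists x, exists y, (e == [set x; y]) && gE G x y]].

Lemma nedgesE G : nedges G = #|Eset G|. Proof. by []. Qed.

Lemma EsetP G e : reflect (exists x y, e = [set x; y] /\ gE G x y) (e \in Eset G).
Proof.
rewrite inE; apply: (iffP existsP) => [[x /existsP [y /andP [/eqP -> xy]]]|[x [y [-> xy]]]].
  by exists x, y.
by exists x; apply/existsP; exists y; rewrite eqxx xy.
Qed.

Section Own.
Variables (G H : graph T) (X : T -> {set T}).
Hypothesis mX : mmodel G H X.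

Definition own x : option T := [pick h | (h \in gV H) && (x \in X h)].

Lemma own_eq h x : h \in gV H -> x \in X h -> own x = Some h.
Proof.
move=> hV xh; rewrite /own; case: pickP => [h' /andP [h'V xh'] | /(_ h)].
  case: (eqVneq h' h) => [-> //| ne]; case: mX => _ _ m3 _ _.
  by case: (m3 _ _ _ h'V hV ne xh' xh).
by rewrite hV xh.
Qed.

Lemma own_some x h : own x = Some h -> (h \in gV H) /\ (x \in X h).
Proof. by rewrite /own; case: pickP => [h' /andP [? ?] [<-] | _] //. Qed.

End Own.

Lemma base_case G H X : wf_graph G -> wf_graph H -> mmodel G H X -> mindeg_ge3 G ->
  nedges G <= nedges H -> forall j, has_tw_le H j -> has_tw_le G j.
Proof.
move=> [sG iG vG] [sH iH vH] mX dG ne j [I [tE [B [[t sub] c ce cn s]]]].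
have mX' := mX; case: mX' => m1 m2 m3 m4 m5.
pose own := own H X.
pose f (e : {set T}) := [set own x | x in e].
pose SE := [set [set Some x | x : T in E0] | E0 : {set T} in Eset H].
have SEsub : SE \subset [set f e | e in Eset G].
  apply/subsetP => _ /imsetP [_ /EsetP [h1 [h2 [-> h12]]] ->].
  have [x [y [xh yh xy]]] := m5 _ _ h12.
  have /andP [h1V h2V] := vH _ _ h12.
  apply/imsetP; exists [set x; y]; first by apply/EsetP; exists x, y.
  by rewrite /f !imsetU1 !imset_set1 /own (own_eq mX h1V xh) (own_eq mX h2V yh).
have SEeq : SE = [set f e | e in Eset G].
  apply/eqP; rewrite eqEcard SEsub /=.
  have -> : #|SE| = #|Eset H|.
    rewrite /SE card_imset //; apply: imset_inj; exact: Some_inj.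
  apply: leq_trans (leq_imset_card _ _) _; exact: ne.
have edge_img x y : gE G x y -> exists h1 h2, gE H h1 h2 /\ [set own x; own y] = [set Some h1; Some h2].
  move=> xy.
  have : f [set x; y] \in SE by rewrite SEeq; apply: imset_f; apply/EsetP; exists x, y.
  case/imsetP => _ /EsetP [h1 [h2 [-> h12]]] eq; exists h1, h2; split => //.
  by move: eq; rewrite /f !imsetU1 !imset_set1.
have ownV x : x \in gV G -> exists h, own x = Some h.
  move=> xV; have := dG _ xV; rewrite /deg => d3.
  have : 0 < #|[set u | gE G x u]| by apply: leq_trans d3.
  rewrite card_gt0 => /set0Pn [y]; rewrite inE => xy.
  have [h1 [h2 [_ eq]]] := edge_img _ _ xy.
  have : own x \in [set own x; own y] by rewrite set21.
  by rewrite eq => /set2P [-> | ->]; eexists.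
have single h x y : h \in gV H -> x \in X h -> y \in X h -> x = y.
  move=> hV xh yh; apply/eqP/negPn/negP => xy.
  have [z /and3P [xz _ zh] _] := connect_first (m4 _ hV _ _ xh yh) xy.
  have [h1 [h2 [h12 eq]]] := edge_img _ _ xz.
  move: eq; rewrite /own (own_eq mX hV xh) (own_eq mX hV zh) setUid => eq.
  have : Some h1 \in [set Some h] by rewrite eq set21.
  have : Some h2 \in [set Some h] by rewrite eq set22.
  by rewrite !inE => /eqP [<-] /eqP [h1h]; move: h12; rewrite h1h iH.
pose B' i := [set x in gV G | if own x is Some h then h \in B i else false].
have B'E i x h : x \in gV G -> own x = Some h -> (x \in B' i) = (h \in B i).
  by move=> xV ox; rewrite inE xV ox.
have B'S i x : x \in B' i -> exists h, [/\ x \in gV G, own x = Some h & h \in B i].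
  by rewrite inE; case/andP => xV; case eo: (own x) => [h|//] hi; exists h.
exists I, tE, B'; split.
- split => // i; apply/subsetP => x; by rewrite inE => /andP [].
- move=> x xV; have [h ox] := ownV _ xV.
  have [hV _] := own_some ox.
  have [i hi] := c _ hV; exists i; by rewrite (B'E _ _ _ xV ox).
- move=> x y xy; have /andP [xV yV] := vG _ _ xy.
  have [h1 [h2 [h12 eq]]] := edge_img _ _ xy.
  have [i /andP [h1i h2i]] := ce _ _ h12.
  have hx : own x \in [set Some h1; Some h2] by rewrite -eq set21.
  have hy : own y \in [set Some h1; Some h2] by rewrite -eq set22.
  exists i; case/set2P: hx => ox; case/set2P: hy => oy;
  by rewrite (B'E _ _ _ xV ox) (B'E _ _ _ yV oy) ?h1i ?h2i.
- move=> x i i' /B'S [h [xV ox hi]] /B'S [h' [_ ox' hi']].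
  move: ox'; rewrite ox => -[eh]; subst h'.
  apply: connect_mono (cn _ _ _ hi hi') => a b /and3P [ab ha hb].
  by rewrite /= ab (B'E _ _ _ xV ox) (B'E _ _ _ xV ox) ha hb.
- move=> i; apply: leq_trans (s i).
  have inj : {in B' i &, injective own}.
    move=> x y /B'S [h [_ ox _]] /B'S [h' [_ oy _]] oxy.
    move: (oy); rewrite -oxy ox => -[hh]; subst h'.
    have [hV xh] := own_some ox; have [_ yh] := own_some oy.
    exact: single hV xh yh.
  rewrite -(card_in_imset inj) -(card_imset (B i) (@Some_inj _)).
  apply: subset_leq_card; apply/subsetP => _ /imsetP [x /B'S [h [_ ox hi]] ->].
  by rewrite ox; apply: imset_f.
Qed.

End S.


Section S.
Variable T : finType.
Implicit Types (G H K : graph T).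

Lemma model_reduce G G' H X w : wf_graph G -> wf_graph H -> mmodel G H X -> mindeg_ge3 H ->
  deg G w <= 2 ->
  gV G' = gV G :\ w ->
  (forall a b, gE G a b -> a != w -> b != w -> gE G' a b) ->
  (forall p q, gE G w p -> gE G w q -> p != q -> gE G' p q) ->
  mmodel G' H (fun h => X h :\ w).
Proof.
move=> [sG iG vG] [sH iH vH] mX dH dw P1 P2 P3.
have mX' := mX; case: mX' => m1 m2 m3 m4 m5.
have ne h : h \in gV H -> X h :\ w != set0.
  move=> hV; apply/negP => /eqP e0.
  have allw z : z \in X h -> z = w.
    move=> zh; apply/eqP/negPn/negP => zw.
    have : z \in X h :\ w by rewrite in_setD1 zw zh.
    by rewrite e0 inE.
  have sub : [set Some u | u in [set u | gE H h u]] \subset [set own H X y | y in [set u | gE G w u]].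
    apply/subsetP => _ /imsetP [h' /[!inE] hh' ->].
    have [x [y [xh yh xy]]] := m5 _ _ hh'.
    have /andP [_ h'V] := vH _ _ hh'.
    apply/imsetP; exists y; first by rewrite inE -(allw _ xh).
    by rewrite (own_eq mX h'V yh).
  have := subset_leq_card sub; rewrite card_imset; last exact: Some_inj.
  move=> /leq_trans /(_ (leq_imset_card _ _)) /leq_trans /(_ dw).
  by move: (dH _ hV); rewrite /deg => d3 /(leq_trans d3).
have nbr h : h \in gV H -> w \in X h -> exists c, [/\ c \in X h, c != w & gE G w c].
  move=> hV wh; have /set0Pn [z /setD1P [zw zh]] := ne _ hV.
  have wz : w != z by rewrite eq_sym.
  have [c /and3P [wc _ ch] _] := connect_first (m4 _ hV _ _ wh zh) wz.
  exists c; split => //; apply: contraTneq wc => ->; by rewrite iG.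
split.
- exact: ne.
- move=> h hV; rewrite P1; apply: setSD; exact: m2.
- move=> h h' z hV h'V hh' /setD1P [_ zh] /setD1P [_ zh']; exact: m3 hV h'V hh' zh zh'.
- move=> h hV x y /setD1P [xw xh] /setD1P [yw yh].
  have hom : forall a b, inside G (X h) a b -> a != w -> b != w -> inside G' (X h :\ w) a b.
    by move=> a b /and3P [ab ah bh] aw bw; rewrite /inside /= P2 // !in_setD1 aw bw ah bh.
  case: (boolP (w \in X h)) => wh; last first.
    apply: connect_mono (m4 _ hV _ _ xh yh) => a b iab; apply: hom => //.
      by case/and3P: iab => _ ah _; apply: contraTneq ah => ->.
    by case/and3P: iab => _ _ bh; apply: contraTneq bh => ->.
  have [c [ch cw wc]] := nbr _ hV wh.
  have pq p q : p \in X h -> q \in X h -> p != w -> q != w -> gE G w p -> gE G w q ->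
      connect (inside G' (X h :\ w)) p q.
    move=> ph qh pw qw wp wq; case: (eqVneq p q) => [-> //| pq].
    by apply: connect1; rewrite /inside /= P3 // !in_setD1 pw qw ph qh.
  pose phi z := if z == w then c else z.
  have := connect_hom (f := phi) _ (m4 _ hV _ _ xh yh).
  rewrite /phi (negbTE xw) (negbTE yw); apply => a b /and3P [ab ah bh].
  case: (eqVneq a w) => [aw | aw]; case: (eqVneq b w) => [bw | bw] //.
  + by apply: pq => //; rewrite -aw.
  + by apply: pq => //; rewrite -bw sG.
  + by apply: connect1; apply: hom; rewrite /inside /= ?ab ?ah ?bh.
- move=> h h' hh'; have [x [y [xh yh xy]]] := m5 _ _ hh'.
  have /andP [hV h'V] := vH _ _ hh'.
  have nhh : h != h' by apply: contraTneq hh' => ->; rewrite iH.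
  case: (eqVneq x w) => [xw | xw].
    subst x; have [c [ch cw wc]] := nbr _ hV xh.
    have yw : y != w by apply: contraTneq yh => ->; apply/negP => wh'; exact: m3 hV h'V nhh xh wh'.
    have cy : c != y by apply: contraTneq ch => ->; apply/negP => yh'; exact: m3 hV h'V nhh yh' yh.
    by exists c, y; rewrite !in_setD1 cw yw ch yh P3.
  case: (eqVneq y w) => [yw | yw].
    subst y; have [c [ch cw wc]] := nbr _ h'V yh.
    have xc : x != c by apply: contraTneq ch => <-; apply/negP => xh'; exact: m3 hV h'V nhh xh xh'.
    by exists x, c; rewrite !in_setD1 cw xw ch xh P3 // sG.
  by exists x, y; rewrite !in_setD1 xw yw xh yh P2.
Qed.

End S.


Definition tEx (I : finType) (tE : rel I) (i0 : I) : rel (option I) :=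
  fun x y => match x, y with
  | Some i, Some j => tE i j
  | None, Some j => j == i0
  | Some i, None => i == i0
  | None, None => false end.

Lemma no_none (I : eqType) (c : seq (option I)) : None \notin c -> exists c0, c = map Some c0.
Proof.
elim: c => [|[x|] c IH]; first by exists [::].
  by rewrite in_cons negb_or => /andP [_ /IH [c0 ->]]; exists (x :: c0).
by rewrite in_cons eqxx.
Qed.

Lemma tree_ext (I : finType) (tE : rel I) (i0 : I) : is_tree tE -> is_tree (tEx tE i0).
Proof.
case=> st it c0 cn ac.
have stx : symmetric (tEx tE i0) by case=> [i|] [j|] //=; exact: st.
have liftS i j : connect tE i j -> connect (tEx tE i0) (Some i) (Some j).
  by apply: connect_hom => a b ab; apply: connect1.
have toi0 x : connect (tEx tE i0) x (Some i0).
  case: x => [i|]; [exact: liftS | by apply: connect1; rewrite /= eqxx].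
split => //.
- by case=> [i|] //=; exact: it.
- by rewrite card_option.
- move=> x y; apply: connect_trans (toi0 x) _.
  by rewrite (sym_connect_sym stx); exact: toi0.
- move=> c uc sc; apply/negP => cc.
  case: (boolP (None \in c)) => Nc.
    case/rot_to: Nc => i s' e.
    move: uc sc cc; rewrite -(rot_uniq i) -(size_rot i) -(rot_cycle i) e.
    case: s' {e} => [|x1 [|y p2]] // uc sc cc.
    move: cc; rewrite /cycle rcons_path /= => /andP [/andP [ex1 _] eN].
    have ex : x1 = Some i0 by case: x1 ex1 {uc sc} => [k /eqP ->|].
    have el : last y p2 = Some i0 by case: (last y p2) eN => [k /eqP ->|].
    have : last y p2 \in y :: p2 by exact: mem_last.
    rewrite el -ex => inp.
    by move: uc; rewrite /= inp /= andbF.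
  have [c1 e] := no_none Nc; subst c.
  move: uc sc cc; rewrite (map_inj_uniq (@Some_inj _)) size_map cycle_map => uc sc cc.
  by have := ac _ uc sc; rewrite cc.
Qed.

Section S.
Variable T : finType.
Implicit Types (G H K : graph T).

Lemma tw_extend G G' w m : wf_graph G -> w \in gV G -> deg G w <= 2 ->
  gV G' = gV G :\ w ->
  (forall a b, gE G a b -> a != w -> b != w -> gE G' a b) ->
  (forall p q, gE G w p -> gE G w q -> p != q -> gE G' p q) ->
  2 <= m -> has_tw_le G' m -> has_tw_le G m.
Proof.
move=> [sG iG vG] wV dw P1 P2 P3 m2 [I [tE [B [[t sub] c ce cn s]]]].
set N := [set u | gE G w u].
have Nw u : u \in N -> u != w by rewrite inE => wu; apply: contraTneq wu => ->; rewrite iG.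
have NV u : u \in N -> u \in gV G' by move=> uN; rewrite P1 in_setD1 Nw //=; move: uN; rewrite inE => /vG /andP [].
have [i0 Ni0] : exists i0, N \subset B i0.
  move: dw; rewrite /deg -/N leq_eqVlt ltnS leq_eqVlt ltnS leqn0.
  case/or3P => [/cards2P [a [b [ab eN]]] | /cards1P [a eN] | /eqP /cards0_eq eN].
  - have aN : a \in N by rewrite eN set21.
    have bN : b \in N by rewrite eN set22.
    have wa : gE G w a by move: aN; rewrite inE.
    have wb : gE G w b by move: bN; rewrite inE.
    have [i /andP [ai bi]] := ce _ _ (P3 _ _ wa wb ab).
    by exists i; rewrite eN subUset !sub1set ai bi.
  - have aN : a \in N by rewrite eN set11.
    have [i ai] := c _ (NV _ aN); by exists i; rewrite eN sub1set.
  - case: t => _ _ c0 _ _; case/card_gt0P: c0 => i _; by exists i; rewrite eN sub0set.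
pose B' (x : option I) := if x is Some i then B i else w |: N.
have wB k x : x \in B k -> x != w.
  by move=> /(subsetP (sub k)); rewrite P1 => /setD1P [].
exists (option I), (tEx tE i0), B'; split.
- split; first exact: tree_ext.
  case=> [i|] /=.
  + apply: subset_trans (sub i) _; rewrite P1; exact: subsetDl.
  + rewrite subUset sub1set wV /=; apply/subsetP => u; rewrite inE => /vG /andP [_ //].
- move=> x xV; case: (eqVneq x w) => [->|xw]; first by exists None; rewrite /= setU11.
  have xV' : x \in gV G' by rewrite P1 in_setD1 xw.
  have [i xi] := c _ xV'; by exists (Some i).
- move=> x y xy; case: (eqVneq x w) => [xw|xw].
    by subst x; exists None; rewrite /= !inE eqxx xy orbT.
  case: (eqVneq y w) => [yw|yw].
    by subst y; exists None; rewrite /= !inE eqxx (sG w x) xy !orbT.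
  have [i /andP [xi yi]] := ce _ _ (P2 _ _ xy xw yw).
  by exists (Some i); rewrite /= xi yi.
- move=> x i j xi xj.
  pose R := [rel a b | [&& tEx tE i0 a b, x \in B' a & x \in B' b]].
  have symR : connect_sym R.
    apply: sym_connect_sym => a b /=.
    have [st _ _ _ _] := tree_ext i0 t.
    by rewrite st (andbC (x \in B' a)).
  have lift k k' : x \in B k -> x \in B k' -> connect R (Some k) (Some k').
    move=> xk xk'; apply: (connect_hom (f := Some)) (cn _ _ _ xk xk') => a b ab.
    exact: connect1.
  case: (eqVneq x w) => [xw|xw].
    subst x; case: i xi => [k /wB|]; first by rewrite eqxx.
    by case: j xj => [k /wB|]; first by rewrite eqxx.
  case: (boolP (x \in N)) => xN.
    have toN l : x \in B' l -> connect R l None.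
      case: l => [k|] /= xk //.
      apply: connect_trans (lift _ _ xk (subsetP Ni0 _ xN)) (connect1 _).
      by rewrite /= eqxx (subsetP Ni0 _ xN) in_setU1 xN orbT.
    apply: connect_trans (toN _ xi) _; rewrite symR; exact: toN.
  case: i xi => [k xk|]; last by rewrite /= in_setU1 (negbTE xw) (negbTE xN).
  case: j xj => [k' xk'|]; last by rewrite /= in_setU1 (negbTE xw) (negbTE xN).
  exact: lift.
- case=> [i|] /=; first exact: s.
  rewrite cardsU1; apply: leq_trans (leq_add (leq_b1 _) dw) _.
  by rewrite add1n ltnS.
Qed.

End S.


Section S.
Variable T : finType.
Implicit Types (G H K : graph T).

Lemma reduce_exists G w : wf_graph G -> w \in gV G -> deg G w <= 2 ->
  exists G', [/\ minor_step G G', gV G' = gV G :\ w,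
    (forall a b, gE G a b -> a != w -> b != w -> gE G' a b) &
    (forall p q, gE G w p -> gE G w q -> p != q -> gE G' p q)].
Proof.
move=> [sG iG vG] wV; rewrite /deg leq_eqVlt ltnS => /orP [/eqP d2 | d1].
- have /set0Pn [a] : [set u | gE G w u] != set0 by rewrite -card_gt0 d2.
  rewrite inE => wa.
  exists (contract G w a); split => //.
  + exact: MS_contract.
  + move=> x y xy xw yw; rewrite /= xw yw xy /=.
    by rewrite andbT; apply: contraTneq xy => ->; rewrite iG.
  + move=> p q wp wq pq.
    have pw : p != w by apply: contraTneq wp => ->; rewrite iG.
    have qw : q != w by apply: contraTneq wq => ->; rewrite iG.
    rewrite /= pw qw pq /=.
    case: (eqVneq p a) => [pa | pa]; first by rewrite wq orbT.
    case: (eqVneq q a) => [qa | qa]; first by rewrite (sG p w) wp !orbT.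
    have sub : [set a; p; q] \subset [set u | gE G w u].
      by apply/subsetP => z; rewrite !inE => /orP [/orP [] | ] /eqP ->.
    have := subset_leq_card sub; rewrite d2 -setUA cardsU1 cards2 pq !inE.
    by rewrite eq_sym (negbTE pa) eq_sym (negbTE qa).
- exists (del_vertex G w); split => //.
  + exact: MS_del_vertex.
  + by move=> x y xy xw yw; rewrite /= xy xw yw.
  + move=> p q wp wq pq.
    have sub : [set p; q] \subset [set u | gE G w u].
      by apply/subsetP => z; rewrite !inE => /orP [] /eqP ->.
    by have := leq_trans (subset_leq_card sub) d1; rewrite cards2 pq.
Qed.

Lemma claim n : forall G, #|gV G| <= n -> wf_graph G -> forall H X, wf_graph H ->
  mmodel G H X -> mindeg_ge3 H ->
  (forall K, minor G K -> mindeg_ge3 K -> nedges K <= nedges H) ->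
  forall j, has_tw_le H j -> has_tw_le G (maxn j 2).
Proof.
elim: n => [|n IH] G sz wG H X wH mX dH mx j tj.
all: have base : mindeg_ge3 G -> has_tw_le G (maxn j 2) by
  move=> dG; apply: tw_mono (leq_maxl j 2) _; apply: (base_case wG wH mX dG) tj;
  apply: mx; [exact: rt_refl | exact: dG].
all: case: (boolP [exists w, (w \in gV G) && (deg G w <= 2)]) => [/existsP [w /andP [wV dw]] | nw];
  last by apply: base => v vV; rewrite leqNgt; apply: contra nw => dv; apply/existsP; exists v; rewrite vV.
- by move: sz; rewrite leqn0 => /eqP /cards0_eq e; rewrite e inE in wV.
have [G' [st P1 P2 P3]] := reduce_exists wG wV dw.
have wG' := wf_step wG st.
have sz' : #|gV G'| <= n by move: sz; rewrite (cardsD1 w) wV P1.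
have mX' := model_reduce wG wH mX dH dw P1 P2 P3.
have mx' K : minor G' K -> mindeg_ge3 K -> nedges K <= nedges H.
  move=> mK; apply: mx; exact: rt_trans (rt_step _ _ _ _ st) mK.
have := IH G' sz' wG' H _ wH mX' dH mx' j tj.
apply: tw_extend wG wV dw P1 P2 P3 _; exact: leq_maxr.
Qed.

End S.


End Aux.
Import Aux.

Theorem theorem23 (T : finType) (G H : graph T) (k : nat) :
  wf_graph G -> treewidth G k -> 3 <= k -> minor3core G H -> treewidth H k.
Proof.
move=> wG [tG minG] k3 [mGH dH mx].
split; first exact: tw_minor wG mGH tG.
move=> j tj.
have [X mX] := model_minor wG mGH.
have wH := wf_minor wG mGH.
have := minG _ (claim (leqnn _) wG wH mX dH mx tj).
rewrite leq_max => /orP [//| k2].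
by move: (leq_trans k3 k2).
Qed.
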